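(* In the standing setting, let $k_1,k_2>0$, $\beta_{\min}\in(\beta_{\mathrm{crit}},1]$, $\beta:[0,\infty)\to[\beta_{\min},1]$ continuous, apply the relieved control law, and let $t_s>0$. If $\mathbf z_0\in\mathcal B:=\{\mathbf x\in\mathbb R^6:\rho\|\mathbf x\|<r\}$, then $\mathbf z_0\in\mathcal E$, and the closed-loop solution satisfies, for all $t\in[0,t_s]$, $$\|\mathbf f_a(t,\mathbf z_1(t))\|\le\sum_{j=1}^P\mu_j\psi_j(\|\mathbf z_0\|,t)\le\phi(\|\mathbf z_0\|),$$ where $$\psi_j(s,t)=\frac{\|\mathbf w_j(t)\|_1}{(\|\mathbf w_j(t)\|-\rho se^{-\theta t})^3}-\frac{\|\mathbf w_j(t)\|_1}{\|\mathbf w_j(t)\|^3}+\frac{\sqrt3\,\rho se^{-\theta t}}{(\|\mathbf w_j(t)\|-\rho se^{-\theta t})^3},\qquad \phi(s)=\max_{t\in[0,t_s]}\sum_{j=1}^P\mu_j\psi_j(s,t).$$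
   Context: Standing setting: Let $P\ge1$. For $j=1,\dots,P$ let $\mu_j>0$ and let $\mathbf r_j:[0,\infty)\to\mathbb R^3$ be continuously differentiable, with $\mathbf r_1\equiv\mathbf 0$. Let $\mathbf r^*:[0,\infty)\to\mathbb R^3$ be continuously differentiable (the target trajectory) with $\mathbf r^*(t)\neq\mathbf r_j(t)$ for all $t\ge0$ and all $j$, and set $\mathbf w_j(t):=\mathbf r_j(t)-\mathbf r^*(t)$. For $t\ge0$ and $\mathbf z_1\in\mathbb R^3$ with $\mathbf z_1\ne\mathbf w_j(t)$ for all $j$, define $$\mathbf f_a(t,\mathbf z_1)=\sum_{j=1}^P\mu_j\left(\frac{\mathbf w_j(t)-\mathbf z_1}{\|\mathbf w_j(t)-\mathbf z_1\|^3}-\frac{\mathbf w_j(t)}{\|\mathbf w_j(t)\|^3}\right).$$ The controlled error dynamics are $\dot{\mathbf z}_1(t)=\mathbf z_2(t)$, $\dot{\mathbf z}_2(t)=\mathbf f_a(t,\mathbf z_1(t))+\mathbf u(t)$, with state $\mathbf z=(\mathbf z_1,\mathbf z_2)\in\mathbb R^6$, control $\mathbf u(t)\in\mathbb R^3$, initial time $0$ and $\mathbf z_0:=\mathbf z(0)$, defined on $\mathcal D(t)=\{(\mathbf x,\mathbf y)\in\mathbb R^6:\mathbf x\neq\mathbf w_j(t),\ j=1,\dots,P\}$. $\|\cdot\|$ is the Euclidean norm and $\|\cdot\|_1$ the $\ell_1$ norm; $\lambda_{\min},\lambda_{\max}$ denote smallest/largest eigenvalues. Relieved control law: $\mathbf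 u(t)=-\beta(t)\big[(1+k_1k_2)\mathbf z_1(t)+(k_1+k_2)\mathbf z_2(t)\big]-\mathbf f_a(t,\mathbf z_1(t))$. Critical relief: $\beta_{\mathrm{crit}}=\dfrac{k_1^4+2k_1k_2+1-2\sqrt{(k_1k_2+1)(k_1k_2+k_1^4)}}{(k_1^2-1)^2}$ if $k_1\ne1$, and $\beta_{\mathrm{crit}}=\dfrac{1}{1+k_2}$ if $k_1=1$. Matrices and constants: $\mathbf X=\begin{bmatrix}(1+k_1^2)\mathbf I_3&k_1\mathbf I_3\\k_1\mathbf I_3&\mathbf I_3\end{bmatrix}$, $\rho=\sqrt{\lambda_{\max}(\mathbf X)/\lambda_{\min}(\mathbf X)}$; $\mathbf U(\beta)=\begin{bmatrix}2(k_1+k_1^2k_2)\beta\,\mathbf I_3 & ((k_1^2+2k_1k_2+1)\beta-k_1^2-1)\mathbf I_3\\ ((k_1^2+2k_1k_2+1)\beta-k_1^2-1)\mathbf I_3 & 2((k_1+k_2)\beta-k_1)\mathbf I_3\end{bmatrix}$; $\theta=\dfrac{\lambda_{\min}(\mathbf U(\beta_{\min}))}{2\lambda_{\max}(\mathbf X)}$; $r=\min_{j=1,\dots,P,\ t\in[0,t_s]}\|\mathbf w_j(t)\|$; $\mathcal E=\{\mathbf y\in\mathbb R^6:\mathbf y^T\mathbf X\mathbf y<\lambda_{\min}(\mathbf X)r^2\}$. *)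

(* Defs.v *)
From HB Require Import structures.
From mathcomp Require Import all_boot all_order all_algebra.
From mathcomp Require Import all_classical all_reals all_analysis.
Set Implicit Arguments. Unset Strict Implicit. Unset Printing Implicit Defensive.
Import Order.TTheory GRing.Theory Num.Theory.
Import numFieldNormedType.Exports.
Local Open Scope classical_set_scope.
Local Open Scope ring_scope.

Section Defs.
Variable R : realType.

Definition enorm (n : nat) (v : 'cV[R]_n) : R := Num.sqrt (\sum_(i < n) v i ord0 ^+ 2).
Definition l1norm (n : nat) (v : 'cV[R]_n) : R := \sum_(i < n) `|v i ord0|.

Definition lam_max (n : nat) (A : 'M[R]_n) : R := sup [set a : R | eigenvalue A a].
Definition lam_min (n : nat) (A : 'M[R]_n) : R := inf [set a : R | eigenvalue A a].

Definition qform (n : nat) (A : 'M[R]_n) (y : 'cV[R]_n) : R := ((y^T *m A *m y) ord0 ord0).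

Definition f_a (P : nat) (mu : 'I_P -> R) (w : 'I_P -> R -> 'cV[R]_3) (t : R) (z1 : 'cV[R]_3)
  : 'cV[R]_3 :=
  \sum_(j < P) mu j *: ((enorm (w j t - z1) ^+ 3)^-1 *: (w j t - z1)
                        - (enorm (w j t) ^+ 3)^-1 *: w j t).

Definition beta_crit (k1 k2 : R) : R :=
  if k1 == 1 then 1 / (1 + k2)
  else (k1 ^+ 4 + 2 * k1 * k2 + 1
        - 2 * Num.sqrt ((k1 * k2 + 1) * (k1 * k2 + k1 ^+ 4))) / (k1 ^+ 2 - 1) ^+ 2.

Definition Xmat (k1 : R) : 'M[R]_(3 + 3) :=
  block_mx ((1 + k1 ^+ 2)%:M) (k1%:M) (k1%:M) (1%:M).

Definition Umat (k1 k2 beta : R) : 'M[R]_(3 + 3) :=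
  let off := (k1 ^+ 2 + 2 * k1 * k2 + 1) * beta - k1 ^+ 2 - 1 in
  block_mx ((2 * (k1 + k1 ^+ 2 * k2) * beta)%:M) (off%:M)
           (off%:M) ((2 * ((k1 + k2) * beta - k1))%:M).

Definition rho (k1 : R) : R := Num.sqrt (lam_max (Xmat k1) / lam_min (Xmat k1)).

Definition theta (k1 k2 beta_min : R) : R :=
  lam_min (Umat k1 k2 beta_min) / (2 * lam_max (Xmat k1)).

Definition rmin (P : nat) (w : 'I_P -> R -> 'cV[R]_3) (ts : R) : R :=
  inf [set x : R | exists j : 'I_P, exists t : R, 0 <= t <= ts /\ x = enorm (w j t)].

Definition Eset (k1 : R) (r : R) : set 'cV[R]_(3 + 3) :=
  [set y | qform (Xmat k1) y < lam_min (Xmat k1) * r ^+ 2].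

Definition Bset (k1 : R) (r : R) : set 'cV[R]_(3 + 3) :=
  [set x | rho k1 * enorm x < r].

Definition psi (rh th : R) (wjt : 'cV[R]_3) (s t : R) : R :=
  let d := enorm wjt - rh * s * expR (- (th * t)) in
  l1norm wjt / d ^+ 3 - l1norm wjt / enorm wjt ^+ 3
  + Num.sqrt 3 * rh * s * expR (- (th * t)) / d ^+ 3.

Definition psi_sum (P : nat) (mu : 'I_P -> R) (w : 'I_P -> R -> 'cV[R]_3)
  (rh th s t : R) : R :=
  \sum_(j < P) mu j * psi rh th (w j t) s t.

Definition phi (P : nat) (mu : 'I_P -> R) (w : 'I_P -> R -> 'cV[R]_3)
  (rh th ts s : R) : R :=
  sup [set x : R | exists t : R, 0 <= t <= ts /\ x = psi_sum mu w rh th s t].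

Definition C1_nonneg (V : normedModType R) (f : R -> V) : Prop :=
  exists f' : R -> V,
    {within `[0, +oo[, continuous f'} /\
    (forall t : R, 0 < t -> is_derive t 1 f (f' t)) /\
    ((fun h : R => h^-1 *: (f h - f 0)) @ 0^'+ --> f' 0).

End Defs.

(* Main.v *)
Require Import Defs.
From HB Require Import structures.
From mathcomp Require Import all_boot all_order all_algebra.
From mathcomp Require Import all_classical all_reals all_analysis.
From mathcomp Require Import ring lra.
Import Order.TTheory GRing.Theory Num.Theory.
Import numFieldNormedType.Exports.
Local Open Scope classical_set_scope.
Local Open Scope ring_scope.

Lemma sum3 {R : realType} (F : 'I_3 -> R) :
  \sum_(i < 3) F i = F ord0 + F (lift ord0 ord0) + F (lift ord0 (lift ord0 ord0)).
Proof. by rewrite !big_ord_recl big_ord0 addr0 addrA. Qed.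

Definition lmn {R : realType} (a b c : R) :=
  (a + c) / 2 - Num.sqrt (((a - c) / 2) ^+ 2 + b ^+ 2).
Definition lmx {R : realType} (a b c : R) :=
  (a + c) / 2 + Num.sqrt (((a - c) / 2) ^+ 2 + b ^+ 2).

Lemma lm_facts {R : realType} (a b c : R) :
  let S := Num.sqrt (((a - c) / 2) ^+ 2 + b ^+ 2) in
  0 <= S /\ S ^+ 2 = ((a - c) / 2) ^+ 2 + b ^+ 2.
Proof.
move=> S; split; first exact: sqrtr_ge0.
by rewrite sqr_sqrtr // addr_ge0 // sqr_ge0.
Qed.

Lemma lm_char {R : realType} (a b c x : R) :
  (a - x) * (c - x) = b ^+ 2 <-> (x = lmn a b c \/ x = lmx a b c).
Proof.
have [S0 S2] := lm_facts a b c.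
rewrite /lmn /lmx; set S := Num.sqrt _ in S0 S2 *.
have E : (a - x) * (c - x) - b ^+ 2 = (x - ((a + c) / 2 - S)) * (x - ((a + c) / 2 + S)).
  have -> : (x - ((a + c) / 2 - S)) * (x - ((a + c) / 2 + S)) =
     (x - (a + c) / 2) ^+ 2 - S ^+ 2 by ring.
  by rewrite S2; field.
split.
  move=> h; have : (x - ((a + c) / 2 - S)) * (x - ((a + c) / 2 + S)) = 0.
    by rewrite -E h subrr.
  by move/eqP; rewrite mulf_eq0 !subr_eq0 => /orP[/eqP|/eqP]; [left|right].
move=> h; apply/eqP; rewrite -subr_eq0 E.
by case: h => ->; rewrite subrr ?mul0r ?mulr0.
Qed.

Lemma lmn_le_lmx {R : realType} (a b c : R) : lmn a b c <= lmx a b c.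
Proof. have [S0 _] := lm_facts a b c; rewrite /lmn /lmx; lra. Qed.

Lemma lmn_quad {R : realType} (a b c y1 y2 : R) :
  lmn a b c * (y1 ^+ 2 + y2 ^+ 2) <= a * y1 ^+ 2 + 2 * b * y1 * y2 + c * y2 ^+ 2.
Proof.
have [S0 S2] := lm_facts a b c.
rewrite /lmn; set S := Num.sqrt _ in S0 S2 *.
set A := a - ((a + c) / 2 - S). set C := c - ((a + c) / 2 - S).
have hA : 0 <= A.
  rewrite /A; have : ((a - c) / 2) ^+ 2 <= S ^+ 2 by rewrite S2; nra.
  nra.
have hC : 0 <= C.
  rewrite /C; have : ((a - c) / 2) ^+ 2 <= S ^+ 2 by rewrite S2; nra.
  nra.
have hAC : A * C = b ^+ 2.
  rewrite /A /C.
  have -> : (a - ((a + c) / 2 - S)) * (c - ((a + c) / 2 - S)) = S ^+ 2 - ((a - c) / 2) ^+ 2.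
    by field.
  by rewrite S2; ring.
suff : 0 <= A * y1 ^+ 2 + 2 * b * y1 * y2 + C * y2 ^+ 2.
  rewrite /A /C; lra.
have [A0|Apos] := eqVneq A 0.
  have b0 : b = 0 by move: hAC; rewrite A0 mul0r => /esym/eqP; rewrite sqrf_eq0 => /eqP.
  rewrite A0 b0; nra.
have Ap : 0 < A by rewrite lt_neqAle eq_sym Apos hA.
have : 0 <= A * (A * y1 ^+ 2 + 2 * b * y1 * y2 + C * y2 ^+ 2).
  have -> : A * (A * y1 ^+ 2 + 2 * b * y1 * y2 + C * y2 ^+ 2) =
      (A * y1 + b * y2) ^+ 2 + (A * C - b ^+ 2) * y2 ^+ 2 by ring.
  by rewrite hAC subrr mul0r addr0 sqr_ge0.
by rewrite pmulr_rge0.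
Qed.

Lemma lmx_quad {R : realType} (a b c y1 y2 : R) :
  a * y1 ^+ 2 + 2 * b * y1 * y2 + c * y2 ^+ 2 <= lmx a b c * (y1 ^+ 2 + y2 ^+ 2).
Proof.
have := lmn_quad (- a) (- b) (- c) y1 y2.
have -> : lmn (- a) (- b) (- c) = - lmx a b c.
  rewrite /lmn /lmx.
  have -> : ((- a - - c) / 2) ^+ 2 + (- b) ^+ 2 = ((a - c) / 2) ^+ 2 + b ^+ 2.
    ring.
  ring.
lra.
Qed.

Definition BM {R : realType} (a b c : R) : 'M[R]_(3 + 3) :=
  block_mx (a%:M) (b%:M) (b%:M) (c%:M).

Lemma qform_BM {R : realType} (a b c : R) (p q : 'cV[R]_3) :
  qform (BM a b c) (col_mx p q) =
  \sum_(i < 3) (a * p i ord0 ^+ 2 + 2 * b * p i ord0 * q i ord0 + c * q i ord0 ^+ 2).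
Proof.
rewrite /qform /BM tr_col_mx mul_row_block !mul_mx_scalar mul_row_col.
rewrite !mxE -big_split /=; apply: eq_bigr => i _; rewrite !mxE; ring.
Qed.


Lemma eig_BM {R : realType} (a b c x : R) :
  eigenvalue (BM a b c) x <-> (a - x) * (c - x) = b ^+ 2.
Proof.
split.
  move/eigenvalueP => [v hv v0].
  rewrite -(hsubmxK v) in hv v0.
  move: hv; rewrite /BM mul_row_block !mul_mx_scalar scale_row_mx.
  move/eq_row_mx => [h1 h2].
  apply/eqP; rewrite -subr_eq0; apply/negP => D0.
  have e1 j : a * lsubmx v ord0 j + b * rsubmx v ord0 j = x * lsubmx v ord0 j.
    by move/matrixP: h1 => /(_ ord0 j); rewrite !mxE.
  have e2 j : b * lsubmx v ord0 j + c * rsubmx v ord0 j = x * rsubmx v ord0 j.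
    by move/matrixP: h2 => /(_ ord0 j); rewrite !mxE.
  have z1 : lsubmx v = 0.
    apply/matrixP => i j; rewrite (ord1 i) [RHS]mxE.
    have D0' : ((a - x) * (c - x) - b ^+ 2 == 0) = false by apply/negP.
    have := e1 j; have := e2 j.
    set p := lsubmx v ord0 j; set q := rsubmx v ord0 j.
    move=> f2 f1.
    apply/eqP; move: (D0'); apply: contraFT => pn0.
    suff : ((a - x) * (c - x) - b ^+ 2) * p == 0 by rewrite mulf_eq0 (negbTE pn0) orbF.
    have -> : ((a - x) * (c - x) - b ^+ 2) * p =
      (c - x) * (a * p + b * q - x * p) - b * (b * p + c * q - x * q) by ring.
    by rewrite f1 f2 !subrr !mulr0 subrr.
  have z2 : rsubmx v = 0.
    apply/matrixP => i j; rewrite (ord1 i) [RHS]mxE.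
    have D0' : ((a - x) * (c - x) - b ^+ 2 == 0) = false by apply/negP.
    have := e1 j; have := e2 j.
    set p := lsubmx v ord0 j; set q := rsubmx v ord0 j.
    move=> f2 f1.
    apply/eqP; move: (D0'); apply: contraFT => pn0.
    suff : ((a - x) * (c - x) - b ^+ 2) * q == 0 by rewrite mulf_eq0 (negbTE pn0) orbF.
    have -> : ((a - x) * (c - x) - b ^+ 2) * q =
      (a - x) * (b * p + c * q - x * q) - b * (a * p + b * q - x * p) by ring.
    by rewrite f1 f2 !subrr !mulr0 subrr.
  by move: v0; rewrite z1 z2 row_mx0 eqxx.
move=> hD.
have [p [q [pq0 [ep eq]]]] : exists p q : R, (p != 0 \/ q != 0) /\
    (a * p + b * q = x * p) /\ (b * p + c * q = x * q).
  have [b0|bn0] := eqVneq b 0.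
    have [xc|xnc] := eqVneq x c.
      exists 0, 1; split; first by right; exact: oner_neq0.
      by rewrite b0 xc; split; ring.
    have hax : (a - x) * (c - x) = 0 by rewrite hD b0 expr0n.
    have ax : a = x.
      move/eqP: hax; rewrite mulf_eq0 => /orP[/eqP|/eqP h].
        by move/eqP; rewrite subr_eq0 => /eqP.
      by move: xnc; rewrite -subr_eq0 -oppr_eq0 opprB h eqxx.
    exists (x - c), 0; split; first by left; rewrite subr_eq0.
    by rewrite b0 ax; split; ring.
  exists b, (x - a); split; first by left.
  split; first by ring.
  have -> : b * b + c * (x - a) = x * (x - a) + (b ^+ 2 - (a - x) * (c - x)) by ring.
  by rewrite hD subrr addr0.
apply/eigenvalueP.
exists (row_mx (p *: const_mx 1) (q *: const_mx 1)).
  rewrite /BM mul_row_block !mul_mx_scalar scale_row_mx !scalerA.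
  rewrite -!scalerDl.
  by rewrite ep eq.
apply/negP => /eqP h.
case: pq0 => [/negP hp|/negP hq].
  apply: hp; move/matrixP: h => /(_ ord0 (lshift 3 ord0)).
  by rewrite row_mxEl !mxE mulr1 => ->.
apply: hq; move/matrixP: h => /(_ ord0 (rshift 3 ord0)).
by rewrite row_mxEr !mxE mulr1 => ->.
Qed.

Lemma eigset_BM {R : realType} (a b c : R) :
  [set x : R | eigenvalue (BM a b c) x] = [set x | x = lmn a b c \/ x = lmx a b c].
Proof. by apply/seteqP; split => x /=; rewrite eig_BM lm_char. Qed.

Lemma lam_min_BM {R : realType} (a b c : R) : lam_min (BM a b c) = lmn a b c.
Proof.
rewrite /lam_min eigset_BM.
have hl := lmn_le_lmx a b c.
have lb : lbound [set x | x = lmn a b c \/ x = lmx a b c] (lmn a b c).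
  by move=> y /= [->|->].
apply/eqP; rewrite eq_le; apply/andP; split.
  by apply: (ge_inf _ (or_introl erefl)); exists (lmn a b c).
by apply: lb_le_inf => //; exists (lmn a b c); left.
Qed.

Lemma lam_max_BM {R : realType} (a b c : R) : lam_max (BM a b c) = lmx a b c.
Proof.
rewrite /lam_max eigset_BM.
have hl := lmn_le_lmx a b c.
have ub : ubound [set x | x = lmn a b c \/ x = lmx a b c] (lmx a b c).
  by move=> y /= [->|->].
apply/eqP; rewrite eq_le; apply/andP; split.
  by apply: ge_sup => //; exists (lmx a b c); right.
by apply: sup_upper_bound; [split; [exists (lmx a b c); right | exists (lmx a b c)] | right].
Qed.

Lemma lm_prod {R : realType} (a b c : R) : lmn a b c * lmx a b c = a * c - b ^+ 2.
Proof.
have [S0 S2] := lm_facts a b c; rewrite /lmn /lmx; set S := Num.sqrt _ in S0 S2 *.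
have -> : ((a + c) / 2 - S) * ((a + c) / 2 + S) = ((a + c) / 2) ^+ 2 - S ^+ 2 by ring.
by rewrite S2; field.
Qed.

Lemma lmn_ge0 {R : realType} (a b c : R) :
  0 <= a -> 0 <= c -> b ^+ 2 <= a * c -> 0 <= lmn a b c.
Proof.
move=> ha hc hb.
have [S0 S2] := lm_facts a b c.
have hp := lm_prod a b c.
have hs : lmn a b c + lmx a b c = a + c by rewrite /lmn /lmx; field.
have hle : lmn a b c <= lmx a b c by rewrite /lmn /lmx; lra.
nra.
Qed.

Lemma lmn_gt0 {R : realType} (a b c : R) :
  0 < a -> 0 < c -> b ^+ 2 < a * c -> 0 < lmn a b c.
Proof.
move=> ha hc hb.
have [S0 S2] := lm_facts a b c.
have hp := lm_prod a b c.
have hs : lmn a b c + lmx a b c = a + c by rewrite /lmn /lmx; field.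
have hle : lmn a b c <= lmx a b c by rewrite /lmn /lmx; lra.
nra.
Qed.

Lemma detW_pos {R : realType} (k1 k2 bm : R) : 0 < k1 -> 0 < k2 ->
  beta_crit k1 k2 < bm -> bm <= 1 ->
  0 < 4 * k1 * (bm * (k1 + k2) - k1) - (1 - bm) ^+ 2 * (k1 ^+ 2 - 1) ^+ 2.
Proof.
move=> h1 h2; rewrite /beta_crit.
have [->|k1n1] := eqVneq k1 1.
  move=> hc hb.
  have hk : 0 < 1 + k2 by lra.
  move: hc; rewrite ltr_pdivrMr // => hc.
  have -> : (1 ^+ 2 - 1 : R) = 0 by ring.
  nra.
set D := (k1 ^+ 2 - 1) ^+ 2.
have Dp : 0 < D.
  rewrite /D lt_neqAle sqr_ge0 andbT eq_sym sqrf_eq0 subr_eq0 sqrf_eq1.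
  apply/negP => /orP[/eqP|/eqP] h; first by move/eqP: k1n1.
  lra.
set Sq := Num.sqrt _.
have S0 : 0 <= Sq by exact: sqrtr_ge0.
have S2 : Sq ^+ 2 = (k1 * k2 + 1) * (k1 * k2 + k1 ^+ 4).
  by rewrite sqr_sqrtr // mulr_ge0 //; nra.
set N := k1 ^+ 4 + 2 * k1 * k2 + 1.
move=> hc hb.
move: hc; rewrite ltr_pdivrMr // => hc.
have key : D * ((1 - bm) ^+ 2 * (k1 ^+ 2 - 1) ^+ 2 - 4 * k1 * (bm * (k1 + k2) - k1)) =
   (bm * D - N - 2 * Sq) * (bm * D - N + 2 * Sq).
  have -> : (bm * D - N - 2 * Sq) * (bm * D - N + 2 * Sq) =
     (bm * D - N) ^+ 2 - 4 * Sq ^+ 2 by ring.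
  by rewrite S2 /D /N; ring.
have f1 : 0 < bm * D - N + 2 * Sq by lra.
have f2 : bm * D - N - 2 * Sq < 0.
  have : N - D = 2 * k1 ^+ 2 + 2 * k1 * k2 by rewrite /N /D; ring.
  nra.
have : D * ((1 - bm) ^+ 2 * (k1 ^+ 2 - 1) ^+ 2 - 4 * k1 * (bm * (k1 + k2) - k1)) < 0.
  by rewrite key; nra.
rewrite pmulr_rlt0 // /D; lra.
Qed.

Definition qU {R : realType} (k1 k2 be X Y : R) :=
  2 * (k1 + k1 ^+ 2 * k2) * be * X ^+ 2
  + 2 * ((k1 ^+ 2 + 2 * k1 * k2 + 1) * be - k1 ^+ 2 - 1) * X * Y
  + 2 * ((k1 + k2) * be - k1) * Y ^+ 2.

Lemma decay_scalar {R : realType} (k1 k2 bm be om : R) : 0 <= k1 + k2 -> bm <= be -> be <= 1 ->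
  (forall X Y, om * (X ^+ 2 + (k1 * X + Y) ^+ 2) <= qU k1 k2 bm X Y) ->
  forall X Y, om * (X ^+ 2 + (k1 * X + Y) ^+ 2) <= qU k1 k2 be X Y.
Proof.
move=> hk h1 h2 H X Y.
have h10 := H 1 (- k1).
have e10 : qU k1 k2 bm 1 (- k1) = 2 * k1 by rewrite /qU; ring.
have e10' : (1 ^+ 2 + (k1 * 1 + - k1) ^+ 2 : R) = 1 by ring.
rewrite e10 e10' mulr1 in h10.
have h01 := H 0 1.
have e01 : qU k1 k2 bm 0 1 = 2 * ((k1 + k2) * bm - k1) by rewrite /qU; ring.
have e01' : (0 ^+ 2 + (k1 * 0 + 1) ^+ 2 : R) = 1 by ring.
rewrite e01 e01' mulr1 in h01.
have hq1 : om * (X ^+ 2 + (k1 * X + Y) ^+ 2) <= qU k1 k2 1 X Y.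
  have -> : qU k1 k2 1 X Y = 2 * k1 * X ^+ 2 + 2 * k2 * (k1 * X + Y) ^+ 2
    by rewrite /qU; ring.
  have : om <= 2 * k2.
    have : (k1 + k2) * bm <= k1 + k2 by rewrite ler_piMr // (le_trans h1 h2).
    lra.
  have := sqr_ge0 X; have := sqr_ge0 (k1 * X + Y).
  nra.
have hH := H X Y.
have [bm1|bm1] := eqVneq bm 1.
  have -> : be = 1 by apply/le_anti; rewrite h2 -bm1 h1.
  exact: hq1.
have bp : 0 < 1 - bm by rewrite subr_gt0 lt_neqAle bm1 (le_trans h1 h2).
have key : (1 - bm) * qU k1 k2 be X Y =
   (1 - be) * qU k1 k2 bm X Y + (be - bm) * qU k1 k2 1 X Y by rewrite /qU; ring.
rewrite -(ler_pM2l bp) key.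
set V := X ^+ 2 + _.
have -> : (1 - bm) * (om * V) = (1 - be) * (om * V) + (be - bm) * (om * V) by ring.
apply: lerD; apply: ler_wpM2l => //; lra.
Qed.

Lemma is_derive_expRM {R : realType} (om t : R) :
  is_derive t 1 (fun s => expR (om * s)) (om * expR (om * t)).
Proof.
have df : derivable (fun s : R => om * s) t 1.
  by apply: ex_derive; apply: is_deriveZ.
have de : derivable (@expR R) (om * t) 1 by exact: ex_derive.
have dc : derivable ((@expR R) \o (fun s => om * s)) t 1.
  apply/derivable1_diffP; apply: differentiable_comp; exact/derivable1_diffP.
apply: DeriveDef; first exact: dc.
rewrite -derive1E (derive1_comp df de) !derive1E.
rewrite (@derive_val _ _ _ _ _ _ _ (is_derive_expR (om * t))).
have h : is_derive t (1:R) (fun s : R => om * s) (om * 1) by apply: is_deriveZ.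
by rewrite (@derive_val _ _ _ _ _ _ _ h) mulr1 mulrC.
Qed.

Lemma lyap_deriv {R : realType} (x y : R -> R) (k1 om t dx dy : R) :
  is_derive t 1 x dx -> is_derive t 1 y dy ->
  is_derive t 1 (fun s => (x s ^+ 2 + (k1 * x s + y s) ^+ 2) * expR (om * s))
   ((2 * x t * dx + 2 * (k1 * x t + y t) * (k1 * dx + dy)) * expR (om * t)
    + (x t ^+ 2 + (k1 * x t + y t) ^+ 2) * (om * expR (om * t))).
Proof.
move=> hx hy.
have hs : is_derive t 1 (fun s => k1 * x s + y s) (k1 * dx + dy).
  have := is_deriveD (is_deriveZ k1 hx) hy; exact.
have hV : is_derive t 1 (fun s => x s ^+ 2 + (k1 * x s + y s) ^+ 2)
   (2 * x t * dx + 2 * (k1 * x t + y t) * (k1 * dx + dy)).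
  have := is_deriveD (is_deriveX 2 hx) (is_deriveX 2 hs).
  have -> : (x ^+ 2 + (fun s => k1 * x s + y s) ^+ 2) =
     (fun s => x s ^+ 2 + (k1 * x s + y s) ^+ 2).
    by apply/funext => s; rewrite /= !expr2.
  move=> h; apply: (is_derive_eq h).
  rewrite /= /GRing.scale /=; ring.
have := is_deriveM hV (is_derive_expRM om t).
have -> : ((fun s => x s ^+ 2 + (k1 * x s + y s) ^+ 2) * (fun s => expR (om * s))) =
   (fun s => (x s ^+ 2 + (k1 * x s + y s) ^+ 2) * expR (om * s)).
  by apply/funext => s.
move=> h; apply: (is_derive_eq h).
rewrite /= /GRing.scale /=; ring.
Qed.

Lemma cM {T : topologicalType} {R : realType} (f h : T -> R) x :
  {for x, continuous f} -> {for x, continuous h} -> {for x, continuous (fun s => f s * h s)}.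
Proof. by move=> ? ?; apply: continuousM. Qed.
Lemma cD {T : topologicalType} {R : realType} (f h : T -> R) x :
  {for x, continuous f} -> {for x, continuous h} -> {for x, continuous (fun s => f s + h s)}.
Proof. by move=> ? ?; apply: continuousD. Qed.

Lemma lyap1 {R : realType} (x y beta : R -> R) (k1 k2 ts om : R) :
  {within `[0, ts], continuous x} -> {within `[0, ts], continuous y} ->
  (forall t, 0 < t < ts -> is_derive t 1 x (y t)) ->
  (forall t, 0 < t < ts -> is_derive t 1 y
       (- (beta t * ((1 + k1 * k2) * x t + (k1 + k2) * y t)))) ->
  (forall t, 0 < t < ts -> forall X Y,
       om * (X ^+ 2 + (k1 * X + Y) ^+ 2) <= qU k1 k2 (beta t) X Y) ->
  forall t, 0 <= t <= ts ->
  (x t ^+ 2 + (k1 * x t + y t) ^+ 2) * expR (om * t) <= x 0 ^+ 2 + (k1 * x 0 + y 0) ^+ 2.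
Proof.
move=> cx cy dx dy hq t /andP[t0 tts].
set g := fun s => (x s ^+ 2 + (k1 * x s + y s) ^+ 2) * expR (om * s).
have key : {in `[0, ts] &, {homo g : a b /~ a <= b}}.
  apply: ler0_derive1_le_cc.
  - move=> s; rewrite in_itv /= => hs.
    by case: (@lyap_deriv _ x y k1 om s _ _ (dx s hs) (dy s hs)).
  - move=> s; rewrite in_itv /= => hs.
    rewrite derive1E (@derive_val _ _ _ _ _ _ _ (@lyap_deriv _ x y k1 om s _ _ (dx s hs) (dy s hs))).
    have E0 := expR_gt0 (om * s).
    have hh := hq s hs (x s) (y s).
    move: hh; rewrite /qU => hh.
    nra.
  - have cc : forall (k : R) (s : subspace `[0, ts]),
        {for s, continuous (fun _ : subspace `[0, ts] => k)}.
      by move=> k s; exact: cst_continuous.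
    have ce : continuous (fun s : subspace `[0, ts] => expR (om * s)).
      apply: continuous_subspaceT => s.
      apply: continuous_comp; first by apply: cM; [exact: cst_continuous|exact: cvg_id].
      exact: continuous_expR.
    move=> s; change {for s, continuous (fun s : subspace `[0, ts] =>
      (x s ^+ 2 + (k1 * x s + y s) ^+ 2) * expR (om * s))}.
    apply: cM; last exact: ce.
    apply: cD; first by apply: cM; [exact: cx | exact: cx].
    by apply: cM; apply: cD; (try exact: cy); apply: cM; (try exact: cc); exact: cx.
have := key t 0; rewrite !in_itv /= lexx t0 tts (le_trans t0 tts) => /(_ isT isT isT).
by rewrite /g mulr0 expR0 mulr1.
Qed.

Lemma sqrt_le {R : realType} (a c : R) : 0 <= c -> a <= c ^+ 2 -> Num.sqrt a <= c.
Proof.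
move=> c0 h; apply: (le_trans (ler_wsqrtr h)).
by rewrite sqrtr_sqr ger0_norm.
Qed.

Lemma sqrt_ge {R : realType} (a c : R) : 0 <= a -> c ^+ 2 <= a -> c <= Num.sqrt a.
Proof.
move=> a0 h; apply: (le_trans (ler_norm c)).
by rewrite -sqrtr_sqr ler_sqrt.
Qed.

Lemma enorm_ge0 {R : realType} {n} (v : 'cV[R]_n) : 0 <= enorm v.
Proof. exact: sqrtr_ge0. Qed.

Lemma enorm_sq {R : realType} {n} (v : 'cV[R]_n) : enorm v ^+ 2 = \sum_(i < n) v i ord0 ^+ 2.
Proof. by rewrite /enorm sqr_sqrtr // sumr_ge0 // => i _; exact: sqr_ge0. Qed.

Lemma enorm3 {R : realType} (v : 'cV[R]_3) :
  enorm v = Num.sqrt (v ord0 ord0 ^+ 2 + v (lift ord0 ord0) ord0 ^+ 2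
                      + v (lift ord0 (lift ord0 ord0)) ord0 ^+ 2).
Proof. by rewrite /enorm sum3. Qed.

Lemma enormZ {R : realType} {n} (c : R) (v : 'cV[R]_n) : enorm (c *: v) = `|c| * enorm v.
Proof.
rewrite /enorm -sqrtr_sqr -sqrtrM ?sqr_ge0 // mulr_sumr.
by congr Num.sqrt; apply: eq_bigr => i _; rewrite mxE exprMn.
Qed.

Lemma enormN {R : realType} {n} (v : 'cV[R]_n) : enorm (- v) = enorm v.
Proof. by rewrite -scaleN1r enormZ normrN normr1 mul1r. Qed.

Lemma enormD {R : realType} (u v : 'cV[R]_3) : enorm (u + v) <= enorm u + enorm v.
Proof.
have hu := enorm_sq u; have hv := enorm_sq v.
rewrite !sum3 in hu hv.
have u0 := enorm_ge0 u; have v0 := enorm_ge0 v.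
apply: sqrt_le; first exact: addr_ge0.
rewrite sum3 !mxE.
set a := u ord0 ord0 in hu *; set b := u _ ord0 in hu *; set c := u _ ord0 in hu *.
set d := v ord0 ord0 in hv *; set e := v _ ord0 in hv *; set f := v _ ord0 in hv *.
have cs : (a * d + b * e + c * f) ^+ 2 <= (enorm u * enorm v) ^+ 2.
  rewrite exprMn hu hv.
  have -> : (a ^+ 2 + b ^+ 2 + c ^+ 2) * (d ^+ 2 + e ^+ 2 + f ^+ 2) =
    (a * d + b * e + c * f) ^+ 2 + ((a * e - b * d) ^+ 2 + (a * f - c * d) ^+ 2
     + (b * f - c * e) ^+ 2) by ring.
  by rewrite lerDl; do 2 (apply: addr_ge0; last exact: sqr_ge0); exact: sqr_ge0.
have cs' : a * d + b * e + c * f <= enorm u * enorm v.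
  have := mulr_ge0 u0 v0; nra.
have -> : (enorm u + enorm v) ^+ 2 = enorm u ^+ 2 + enorm v ^+ 2 + 2 * (enorm u * enorm v)
  by ring.
rewrite hu hv; lra.
Qed.

Lemma enorm0 {R : realType} {n} : enorm (0 : 'cV[R]_n) = 0.
Proof. by rewrite /enorm big1 ?sqrtr0 // => i _; rewrite mxE expr0n. Qed.

Lemma enorm_sum {R : realType} {P} (F : 'I_P -> 'cV[R]_3) :
  enorm (\sum_(j < P) F j) <= \sum_(j < P) enorm (F j).
Proof.
apply: (big_ind2 (fun x y => enorm x <= y)); first by rewrite enorm0.
  by move=> x1 x2 y1 y2 h1 h2; apply: (le_trans (enormD _ _)); apply: lerD.
by [].
Qed.

Lemma enormB_ge {R : realType} (w z : 'cV[R]_3) : enorm w - enorm z <= enorm (w - z).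
Proof.
have := enormD (w - z) z; rewrite subrK; lra.
Qed.

Lemma enormB_le {R : realType} (w z : 'cV[R]_3) : enorm (w - z) <= enorm w + enorm z.
Proof. by have := enormD w (- z); rewrite enormN. Qed.

Lemma l1_ge {R : realType} (v : 'cV[R]_3) : enorm v <= l1norm v.
Proof.
rewrite /l1norm enorm3 sum3.
have h0 := normr_ge0 (v ord0 ord0).
have h1 := normr_ge0 (v (lift ord0 ord0) ord0).
have h2 := normr_ge0 (v (lift ord0 (lift ord0 ord0)) ord0).
apply: sqrt_le; first by rewrite !addr_ge0.
rewrite -(real_normK (num_real (v ord0 ord0))).
rewrite -(real_normK (num_real (v (lift ord0 ord0) ord0))).
rewrite -(real_normK (num_real (v (lift ord0 (lift ord0 ord0)) ord0))).
nra.
Qed.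

Lemma l1_le {R : realType} (v : 'cV[R]_3) : l1norm v <= Num.sqrt 3 * enorm v.
Proof.
rewrite /l1norm enorm3 sum3 -sqrtrM; last by [].
apply: sqrt_ge; first by rewrite mulr_ge0 // !addr_ge0 // sqr_ge0.
rewrite -(real_normK (num_real (v ord0 ord0))).
rewrite -(real_normK (num_real (v (lift ord0 ord0) ord0))).
rewrite -(real_normK (num_real (v (lift ord0 (lift ord0 ord0)) ord0))).
set a := `|_|; set b := `|_|; set c := `|_|.
have := sqr_ge0 (a - b); have := sqr_ge0 (b - c); have := sqr_ge0 (a - c).
nra.
Qed.

Lemma enorm_col_sq {R : realType} (p q : 'cV[R]_3) :
  enorm (col_mx p q) ^+ 2 = \sum_(i < 3) (p i ord0 ^+ 2 + q i ord0 ^+ 2).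
Proof.
rewrite enorm_sq big_split_ord /= big_split /=.
by congr (_ + _); apply: eq_bigr => i _; rewrite ?col_mxEu ?col_mxEd.
Qed.

Lemma inv3_le {R : realType} (x y : R) : 0 < x -> x <= y -> (y ^+ 3)^-1 <= (x ^+ 3)^-1.
Proof.
move=> x0 xy; have y0 : 0 < y by apply: lt_le_trans xy.
rewrite lef_pV2 ?posrE ?exprn_gt0 //.
by rewrite lerXn2r // ?nnegrE ltW.
Qed.

Lemma key_conv {R : realType} (n r : R) : 0 <= r -> r < n ->
  2 * (n ^+ 3)^-1 * n <= ((n - r) ^+ 3)^-1 * (n + r) + ((n + r) ^+ 3)^-1 * (n - r).
Proof.
move=> r0 rn.
have n0 : 0 < n by apply: le_lt_trans rn.
have p0 : 0 < n - r by rewrite subr_gt0.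
have q0 : 0 < n + r by lra.
suff : 0 <= ((n - r) ^+ 3)^-1 * (n + r) + ((n + r) ^+ 3)^-1 * (n - r) - 2 * (n ^+ 3)^-1 * n.
  lra.
have -> : ((n - r) ^+ 3)^-1 * (n + r) + ((n + r) ^+ 3)^-1 * (n - r) - 2 * (n ^+ 3)^-1 * n
   = (18 * n ^+ 4 * r ^+ 2 - 4 * n ^+ 2 * r ^+ 4 + 2 * r ^+ 6)
     / (n ^+ 2 * (n - r) ^+ 3 * (n + r) ^+ 3).
  field; by rewrite !gt_eqF.
apply: divr_ge0; last by rewrite !mulr_ge0 // ?exprn_ge0 // ltW.
have h : 0 <= 9 * n ^+ 2 - 2 * r ^+ 2 by nra.
have -> : 18 * n ^+ 4 * r ^+ 2 - 4 * n ^+ 2 * r ^+ 4 + 2 * r ^+ 6 =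
   2 * (n ^+ 2 * r ^+ 2) * (9 * n ^+ 2 - 2 * r ^+ 2) + 2 * r ^+ 6 by ring.
by rewrite addr_ge0 // ?mulr_ge0 // ?exprn_ge0 // ?sqr_ge0 // ltW.
Qed.

Lemma term_scalar {R : realType} (n m s rp n1 : R) :
  0 <= s -> s <= rp -> rp < n -> n - s <= m -> m <= n + s -> n <= n1 ->
  `|(m ^+ 3)^-1 - (n ^+ 3)^-1| * n + (m ^+ 3)^-1 * s <=
  n1 / (n - rp) ^+ 3 - n1 / n ^+ 3 + Num.sqrt 3 * rp / (n - rp) ^+ 3.
Proof.
move=> s0 srp rpn m1 m2 nn1.
have rp0 : 0 <= rp by apply: le_trans srp.
have d0 : 0 < n - rp by rewrite subr_gt0.
have n0 : 0 < n by apply: le_lt_trans rpn.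
have m0 : 0 < m by lra.
set A := (m ^+ 3)^-1; set B := (n ^+ 3)^-1; set Dd := ((n - rp) ^+ 3)^-1.
set E := ((n + rp) ^+ 3)^-1.
have AD : A <= Dd by apply: inv3_le => //; lra.
have BD : B <= Dd by apply: inv3_le => //; lra.
have EA : E <= A by apply: inv3_le => //; lra.
have A0 : 0 <= A by rewrite invr_ge0 exprn_ge0 // ltW.
have E0 : 0 <= E by rewrite invr_ge0 exprn_ge0 // addr_ge0 // ltW.
have s3 : 1 <= Num.sqrt (3 : R).
  rewrite -{1}sqrtr1 ler_sqrt //; lra.
have key := @key_conv _ n rp rp0 rpn.
rewrite -/B -/Dd -/E in key.
have Dd0 : 0 <= Dd by apply: le_trans AD.
have R0 : (Dd - B) * n + Dd * rp <= n1 / (n - rp) ^+ 3 - n1 / n ^+ 3 + Num.sqrt 3 * rp / (n - rp) ^+ 3.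

  have h1 : (Dd - B) * n <= (Dd - B) * n1 by apply: ler_wpM2l; lra.
  have h2 : Dd * rp <= Num.sqrt 3 * rp * Dd.
    have := mulr_ge0 Dd0 rp0; nra.
  have -> : n1 / (n - rp) ^+ 3 = n1 * Dd by [].
  have -> : n1 / n ^+ 3 = n1 * B by [].
  have -> : Num.sqrt 3 * rp / (n - rp) ^+ 3 = Num.sqrt 3 * rp * Dd by [].
  lra.
apply: (le_trans _ R0).
have [AB|AB] := leP B A.
  rewrite ger0_norm ?subr_ge0 //.
  have := mulr_ge0 A0 s0; have := mulr_ge0 Dd0 rp0.
  nra.
rewrite ltr0_norm ?subr_lt0 //.
have h3 : E * (n - rp) <= A * (n - s).
  apply: ler_pM => //; lra.
nra.
Qed.


Lemma term_vec {R : realType} (w z : 'cV[R]_3) :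
  enorm ((enorm (w - z) ^+ 3)^-1 *: (w - z) - (enorm w ^+ 3)^-1 *: w) <=
  `|(enorm (w - z) ^+ 3)^-1 - (enorm w ^+ 3)^-1| * enorm w
   + (enorm (w - z) ^+ 3)^-1 * enorm z.
Proof.
set A := (enorm (w - z) ^+ 3)^-1; set B := (enorm w ^+ 3)^-1.
have -> : A *: (w - z) - B *: w = (A - B) *: w + - (A *: z).
  by rewrite scalerBr scalerBl; rewrite addrAC.
apply: (le_trans (enormD _ _)).
rewrite enormN !enormZ (ger0_norm (_ : 0 <= A)) //.
by rewrite /A invr_ge0 exprn_ge0 // enorm_ge0.
Qed.

Lemma term_full {R : realType} (w z : 'cV[R]_3) (rp : R) :
  enorm z <= rp -> rp < enorm w ->
  enorm ((enorm (w - z) ^+ 3)^-1 *: (w - z) - (enorm w ^+ 3)^-1 *: w) <=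
  l1norm w / (enorm w - rp) ^+ 3 - l1norm w / enorm w ^+ 3
  + Num.sqrt 3 * rp / (enorm w - rp) ^+ 3.
Proof.
move=> hz hw.
apply: (le_trans (term_vec w z)).
apply: term_scalar => //.
- exact: enorm_ge0.
- have := enormB_ge w z; lra.
- exact: enormB_le.
- exact: l1_ge.
Qed.

Lemma is_derive_entry {R : realType} (f : R -> 'cV[R]_3) (t : R) (df : 'cV[R]_3) i :
  is_derive t 1 f df -> is_derive t 1 (fun s => f s i ord0) (df i ord0).
Proof.
case=> d dv.
have di := (derivable_mxP f t 1).1 d i ord0.
apply: DeriveDef => //.
by rewrite -dv (derive_mx d) mxE.
Qed.

Lemma cont_entry {R : realType} (f : R -> 'cV[R]_3) (ts : R) i :
  {within `[0, ts], continuous f} -> {within `[0, ts], continuous (fun s => f s i ord0)}.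
Proof.
move=> cf s.
change {for s, continuous ((fun M : 'cV[R]_3 => M i ord0) \o (from_subspace `[0, ts] f))}.
apply: continuous_comp; first exact: cf.
exact: coord_continuous.
Qed.
Lemma inv2_le {R : realType} (x y : R) : 0 < x -> x <= y -> (y ^+ 2)^-1 <= (x ^+ 2)^-1.
Proof.
move=> x0 xy; have y0 : 0 < y by apply: lt_le_trans xy.
rewrite lef_pV2 ?posrE ?exprn_gt0 //.
by rewrite lerXn2r // ?nnegrE ltW.
Qed.

Lemma psi_ub {R : realType} (n rp q de l1 : R) :
  0 <= rp -> rp <= q -> 0 < de -> de <= n - rp -> 0 <= l1 -> l1 <= Num.sqrt 3 * n ->
  l1 / (n - rp) ^+ 3 - l1 / n ^+ 3 + Num.sqrt 3 * rp / (n - rp) ^+ 3 <=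
  Num.sqrt 3 / de ^+ 2 + 2 * Num.sqrt 3 * q / de ^+ 3.
Proof.
move=> rp0 rpq de0 ded l10 l1n.
have d0 : 0 < n - rp by apply: lt_le_trans ded.
have n0 : 0 < n by lra.
set d := n - rp in d0 ded *.
have ed : n = d + rp by rewrite /d; ring.
have iD : (d ^+ 3)^-1 <= (de ^+ 3)^-1 by apply: inv3_le.
have iD2 : (d ^+ 2)^-1 <= (de ^+ 2)^-1 by apply: inv2_le.
have iD0 : 0 <= (d ^+ 3)^-1 by rewrite invr_ge0 exprn_ge0 // ltW.
have iN0 : 0 <= (n ^+ 3)^-1 by rewrite invr_ge0 exprn_ge0 // ltW.
have dd : d * (d ^+ 3)^-1 = (d ^+ 2)^-1 by field; rewrite gt_eqF.
have s30 : 0 <= Num.sqrt (3 : R) := sqrtr_ge0 _.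
have h1 : l1 * (d ^+ 3)^-1 <= Num.sqrt 3 * n * (d ^+ 3)^-1 by apply: ler_wpM2r.
have h2 : Num.sqrt 3 * n * (d ^+ 3)^-1 =
   Num.sqrt 3 * (d ^+ 2)^-1 + Num.sqrt 3 * rp * (d ^+ 3)^-1.
  by rewrite ed -dd; ring.
have h3 : Num.sqrt 3 * (d ^+ 2)^-1 <= Num.sqrt 3 * (de ^+ 2)^-1 by apply: ler_wpM2l.
have h4 : Num.sqrt 3 * rp * (d ^+ 3)^-1 <= Num.sqrt 3 * q * (de ^+ 3)^-1.
  rewrite -!mulrA; apply: ler_wpM2l => //; apply: ler_pM => //.
have h5 : 0 <= l1 * (n ^+ 3)^-1 by rewrite mulr_ge0.
lra.
Qed.

Lemma psi_eq {R : realType} (rh th s t : R) (v : 'cV[R]_3) :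
  psi rh th v s t =
  l1norm v / (enorm v - rh * s * expR (- (th * t))) ^+ 3 - l1norm v / enorm v ^+ 3
  + Num.sqrt 3 * (rh * s * expR (- (th * t))) / (enorm v - rh * s * expR (- (th * t))) ^+ 3.
Proof. by rewrite /psi /= !mulrA. Qed.

Theorem mainTheorem7 (R : realType) (P : nat) (mu : 'I_P -> R)
  (rr : 'I_P -> R -> 'cV[R]_3) (rstar : R -> 'cV[R]_3)
  (k1 k2 beta_min : R) (beta : R -> R) (ts : R)
  (z1 z2 : R -> 'cV[R]_3) :
  (0 < P)%N ->
  (forall j, 0 < mu j) ->
  (forall j, C1_nonneg (rr j)) ->
  (forall j : 'I_P, val j = 0%N -> forall t : R, 0 <= t -> rr j t = 0) ->
  C1_nonneg rstar ->
  (forall j t, 0 <= t -> rstar t != rr j t) ->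
  let w := fun (j : 'I_P) (t : R) => rr j t - rstar t in
  0 < k1 -> 0 < k2 ->
  beta_crit k1 k2 < beta_min <= 1 ->
  {within `[0, +oo[, continuous beta} ->
  (forall t, 0 <= t -> beta_min <= beta t <= 1) ->
  0 < ts ->
  (* closed-loop solution on [0, t_s] under the relieved control law *)
  let u := fun t : R =>
    - (beta t *: ((1 + k1 * k2) *: z1 t + (k1 + k2) *: z2 t)) - f_a mu w t (z1 t) in
  {within `[0, ts], continuous z1} ->
  {within `[0, ts], continuous z2} ->
  (forall t, 0 < t < ts -> is_derive t 1 z1 (z2 t)) ->
  (forall t, 0 < t < ts -> is_derive t 1 z2 (f_a mu w t (z1 t) + u t)) ->
  (forall t j, 0 <= t <= ts -> z1 t != w j t) ->
  let z0 := col_mx (z1 0) (z2 0) in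
  let r := rmin w ts in
  let rh := rho k1 in
  let th := theta k1 k2 beta_min in
  Bset k1 r z0 ->
  Eset k1 r z0 /\
  (forall t, 0 <= t <= ts ->
     enorm (f_a mu w t (z1 t)) <= psi_sum mu w rh th (enorm z0) t /\
     psi_sum mu w rh th (enorm z0) t <= phi mu w rh th ts (enorm z0)).
Proof.
move=> P0 mu0 rrC rr0 rsC rsne w k10 k20 /andP[bc bm1] bcont brng ts0 u cz1 cz2 dz1 dz2 zne.
move=> z0 r rh th hB.
set a := 1 + k1 ^+ 2.
have hX : Xmat k1 = BM a k1 1 by [].
set L := lmx a k1 1; set l := lmn a k1 1.
have hL : lam_max (Xmat k1) = L by rewrite hX lam_max_BM.
have hl : lam_min (Xmat k1) = l by rewrite hX lam_min_BM.
have l0 : 0 < l by apply: lmn_gt0; rewrite /a; nra.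
have lL : l <= L := lmn_le_lmx a k1 1.
have L0 : 0 < L by apply: lt_le_trans lL.
set aU := 2 * (k1 + k1 ^+ 2 * k2) * beta_min.
set oU := (k1 ^+ 2 + 2 * k1 * k2 + 1) * beta_min - k1 ^+ 2 - 1.
set cU := 2 * ((k1 + k2) * beta_min - k1).
have hU : Umat k1 k2 beta_min = BM aU oU cU by [].
set m := lmn aU oU cU.
have dW := detW_pos k1 k2 beta_min k10 k20 bc bm1.
have bk : k1 < beta_min * (k1 + k2).
  have := sqr_ge0 ((1 - beta_min) * (k1 ^+ 2 - 1)); rewrite exprMn; nra.
have bm0 : 0 < beta_min.
  have : 0 < beta_min * (k1 + k2) by lra.
  by rewrite pmulr_lgt0 // addr_gt0.
have m0 : 0 <= m.
  apply: lmn_ge0.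
  - rewrite /aU; nra.
  - rewrite /cU; nra.
  - have -> : aU * cU = oU ^+ 2 + (4 * k1 * (beta_min * (k1 + k2) - k1)
       - (1 - beta_min) ^+ 2 * (k1 ^+ 2 - 1) ^+ 2) by rewrite /aU /cU /oU; ring.
    lra.
have hth : th = m / (2 * L) by rewrite /th /theta hU lam_min_BM hL.
have hrh : rh = Num.sqrt (L / l) by rewrite /rh /rho hL hl.
set om := m / L.
have om0 : 0 <= om by rewrite /om divr_ge0 // ltW.
have base : forall X Y, om * (X ^+ 2 + (k1 * X + Y) ^+ 2) <= qU k1 k2 beta_min X Y.
  move=> X Y.
  have h1 := lmn_quad aU oU cU X Y.
  have e1 : qU k1 k2 beta_min X Y = aU * X ^+ 2 + 2 * oU * X * Y + cU * Y ^+ 2.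
    by rewrite /qU /aU /oU /cU; ring.
  have h2 := lmx_quad a k1 1 X Y.
  have e2 : X ^+ 2 + (k1 * X + Y) ^+ 2 = a * X ^+ 2 + 2 * k1 * X * Y + 1 * Y ^+ 2.
    by rewrite /a; ring.
  rewrite e1 e2.
  have hoL : om * L = m by rewrite /om; field; rewrite gt_eqF.
  have := ler_wpM2l om0 h2.
  rewrite -/L => h3.
  have h4 : om * (L * (X ^+ 2 + Y ^+ 2)) = m * (X ^+ 2 + Y ^+ 2) by rewrite mulrA hoL.
  rewrite h4 in h3; exact: le_trans h3 h1.
have decay : forall t, 0 < t < ts -> forall X Y,
    om * (X ^+ 2 + (k1 * X + Y) ^+ 2) <= qU k1 k2 (beta t) X Y.
  move=> t /andP[t0 _]; have /andP[b1 b2] := brng t (ltW t0).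
  have hk : 0 <= k1 + k2 by lra.
  exact: (@decay_scalar _ k1 k2 beta_min (beta t) om hk b1 b2 base).
have lyap : forall (i : 'I_3) t, 0 <= t <= ts ->
   (z1 t i ord0 ^+ 2 + (k1 * z1 t i ord0 + z2 t i ord0) ^+ 2) * expR (om * t)
   <= z1 0 i ord0 ^+ 2 + (k1 * z1 0 i ord0 + z2 0 i ord0) ^+ 2.
  move=> i.
  apply: (@lyap1 _ (fun s => z1 s i ord0) (fun s => z2 s i ord0) beta k1 k2 ts om).
  - exact: cont_entry.
  - exact: cont_entry.
  - by move=> t ht; exact: (@is_derive_entry _ _ _ _ i (dz1 t ht)).
  - move=> t ht; have := @is_derive_entry _ _ _ _ i (dz2 t ht).
    move=> h; apply: (is_derive_eq h).
    by rewrite /u addrC subrK !mxE.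
  - exact: decay.
set s := enorm z0.
have s0 : 0 <= s := enorm_ge0 z0.
have rh0 : 0 <= rh by rewrite hrh sqrtr_ge0.
have th0 : 0 <= th by rewrite hth divr_ge0 // mulr_ge0 // ltW.
have hom : om = 2 * th by rewrite hth /om; field; rewrite gt_eqF.
have Vq : forall X Y : R, X ^+ 2 + (k1 * X + Y) ^+ 2 = a * X ^+ 2 + 2 * k1 * X * Y + 1 * Y ^+ 2.
  by move=> X Y; rewrite /a; ring.
have zbound : forall t, 0 <= t <= ts -> enorm (z1 t) <= rh * s * expR (- (th * t)).
  move=> t ht.
  have sumL : \sum_(i < 3) ((z1 t i ord0 ^+ 2 + (k1 * z1 t i ord0 + z2 t i ord0) ^+ 2)
        * expR (om * t)) <=
      \sum_(i < 3) (z1 0 i ord0 ^+ 2 + (k1 * z1 0 i ord0 + z2 0 i ord0) ^+ 2).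
    by apply: ler_sum => i _; exact: lyap.
  rewrite -mulr_suml in sumL.
  have lowV : l * enorm (z1 t) ^+ 2 <=
      \sum_(i < 3) (z1 t i ord0 ^+ 2 + (k1 * z1 t i ord0 + z2 t i ord0) ^+ 2).
    rewrite enorm_sq mulr_sumr; apply: ler_sum => i _.
    rewrite Vq; apply: le_trans (lmn_quad a k1 1 _ _).
    rewrite -/l; have := sqr_ge0 (z2 t i ord0); nra.
  have upV0 : \sum_(i < 3) (z1 0 i ord0 ^+ 2 + (k1 * z1 0 i ord0 + z2 0 i ord0) ^+ 2)
      <= L * s ^+ 2.
    rewrite /s /z0 enorm_col_sq mulr_sumr; apply: ler_sum => i _.
    by rewrite Vq; apply: lmx_quad.
  set E := expR (- (th * t)).
  have E0 : 0 <= E := expR_ge0 _.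
  have eE : expR (om * t) * E ^+ 2 = 1.
    rewrite /E -expRM_natr hom -expRD.
    have -> : 2 * th * t + - (th * t) * 2%:R = 0 by ring.
    exact: expR0.
  set Vt := \sum_(i < 3) _ in lowV sumL.
  have eP := expR_gt0 (om * t).
  have h1 : l * enorm (z1 t) ^+ 2 * expR (om * t) <= L * s ^+ 2.
    apply: le_trans upV0; apply: le_trans sumL.
    by apply: ler_wpM2r => //; exact: ltW.
  have h2 : enorm (z1 t) ^+ 2 <= (rh * s * E) ^+ 2.
    have -> : (rh * s * E) ^+ 2 = rh ^+ 2 * s ^+ 2 * E ^+ 2 by ring.
    have -> : rh ^+ 2 = L / l by rewrite hrh sqr_sqrtr // divr_ge0 // ltW.
    have -> : enorm (z1 t) ^+ 2 = (l * enorm (z1 t) ^+ 2 * expR (om * t)) * E ^+ 2 / l.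
      have -> : (l * enorm (z1 t) ^+ 2 * expR (om * t)) * E ^+ 2 / l =
          enorm (z1 t) ^+ 2 * (expR (om * t) * E ^+ 2) by field; rewrite gt_eqF.
      by rewrite eE mulr1.
    have -> : L / l * s ^+ 2 * E ^+ 2 = (L * s ^+ 2) * E ^+ 2 / l by field; rewrite gt_eqF.
    apply: ler_wpM2r; first by rewrite invr_ge0 ltW.
    by apply: ler_wpM2r => //; exact: sqr_ge0.
  have := enorm_ge0 (z1 t); have := mulr_ge0 (mulr_ge0 rh0 s0) E0; nra.
have Bh : rh * s < r by exact: hB.
have rfact : forall j t, 0 <= t <= ts -> r <= enorm (w j t).
  move=> j t ht.
  apply: (ge_inf (E := [set x : R | exists j : 'I_P, exists t : R, 0 <= t <= ts /\ x = enorm (w j t)])).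
    by exists 0 => y [j' [t' [_ ->]]]; exact: enorm_ge0.
  by exists j, t.
split.
  rewrite /Eset /= hX hl /z0 qform_BM.
  have h1 : \sum_(i < 3) (a * z1 0 i ord0 ^+ 2 + 2 * k1 * z1 0 i ord0 * z2 0 i ord0
              + 1 * z2 0 i ord0 ^+ 2) <= L * s ^+ 2.
    rewrite /s /z0 enorm_col_sq mulr_sumr; apply: ler_sum => i _.
    exact: lmx_quad.
  apply: le_lt_trans h1 _.
  have h2 : (rh * s) ^+ 2 < r ^+ 2.
    have := mulr_ge0 rh0 s0; nra.
  have e : (rh * s) ^+ 2 = (L * s ^+ 2) / l.
    by rewrite exprMn hrh sqr_sqrtr ?divr_ge0 ?ltW // mulrAC.
  by move: h2; rewrite e ltr_pdivrMr // [r ^+ 2 * l]mulrC.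
have Eb : forall t, 0 <= t -> 0 <= rh * s * expR (- (th * t)) <= rh * s.
  move=> t t0; have E0 := expR_ge0 (- (th * t)).
  have E1 : expR (- (th * t)) <= 1 by rewrite expR_le1 oppr_le0 mulr_ge0.
  have h := mulr_ge0 rh0 s0; apply/andP; split; nra.
have de0 : 0 < r - rh * s by rewrite subr_gt0.
set Bd := Num.sqrt 3 / (r - rh * s) ^+ 2 + 2 * Num.sqrt 3 * (rh * s) / (r - rh * s) ^+ 3.
have psiB : forall t, 0 <= t <= ts -> psi_sum mu w rh th s t <= \sum_(j < P) mu j * Bd.
  move=> t ht; apply: ler_sum => j _.
  apply: ler_wpM2l; first exact: ltW.
  have /andP[rp0 rpq] := Eb t (proj1 (andP ht)).
  rewrite psi_eq; apply: psi_ub => //.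
  - have := rfact j t ht; lra.
  - exact: le_trans (enorm_ge0 _) (l1_ge _).
  - exact: l1_le.
move=> t ht.
have /andP[rp0 rpq] := Eb t (proj1 (andP ht)).
split.
  rewrite /f_a; apply: le_trans (enorm_sum _) _.
  rewrite /psi_sum; apply: ler_sum => j _.
  rewrite enormZ (ger0_norm (ltW (mu0 j))).
  apply: ler_wpM2l; first exact: ltW.
  rewrite psi_eq; apply: term_full; first exact: zbound.
  exact: le_lt_trans rpq (lt_le_trans Bh (rfact j t ht)).
rewrite /phi; apply: sup_upper_bound; last by exists t.
split; first by exists (psi_sum mu w rh th s t), t.
exists (\sum_(j < P) mu j * Bd) => y [t' [ht' ->]].
exact: psiB.
Qed.
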